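(* Let $Q$ be a quantale, $M$ a shrinkable $Q$-module, and $\mathcal{F},\mathcal{G}\in\operatorname{mF}(Q)$ such that $\mathcal{F}+\mathcal{G}$ is 1-step over $M$. Then: (a) if there exists $\mathcal{H}\in\operatorname{mF}(Q)$ localizable over $M$ with $\mathcal{F}\cap\mathcal{G}\subseteq\mathcal{H}\subseteq\mathcal{F}$, then $\mathcal{F}$ is localizable over $M$; (b) if $sm=m$ for all $s\in\mathcal{F}\cap\mathcal{G}$ and $m\in M$, then both $\mathcal{F}$ and $\mathcal{G}$ are 1-step over $M$.
   Context: A quantale is a poset $Q$ in which every nonempty subset has a join $\sum$ (binary join $a+b$; no bottom required), with top $1$ and a commutative associative multiplication with unit $1$ distributing over nonempty joins. A $Q$-module is a poset $M$ with all nonempty joins and an associative unital action $Q\times M\to M$ distributing over nonempty joins in each variable. A multiplicative filter (m-filter) is a subset of $Q$ containing $1$, upward closed and closed under multiplication; $\operatorname{mF}(Q)$ is the set of them; $\mathcal{F}+\mathcal{G}$ is the smallest m-filter containing $\mathcal{F}\cup\mathcal{G}$. For $x,x_i$ write $x\le^*\sum_{i\in I}x_i$ if $x\le\sum_{i\in I_0}x_i$ for a finite nonempty $I_0\subseteq I$. $M$ is shrinkable if whenever $x\le\sum_ix_i$ there is a family $(y_j)$ with $x=\sum_jy_j$ and each $y_j\le^*\sum_ix_i$. For $a,b\in M$: $a\preceq^1_\mathcal{F}b$ means there are families $(a_i)$ in $M$, $(s_i)$ in $\mathcal{F}$ with $a\le\sum_ia_i$, $s_ia_i\le b$; $a\preceq^n_\mathcal{F}b$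 means a chain of $n$ such steps through elements of $M$; $a\preceq_\mathcal{F}b$ means $a\preceq^n_\mathcal{F}b$ for some $n\ge1$. $\mathcal{F}$ is localizable over $M$ if for each $b\in M$ there is $n_b\in\mathbb{N}$ with $a\preceq_\mathcal{F}b\Rightarrow a\preceq^{n_b}_\mathcal{F}b$ for all $a$; $\mathcal{F}$ is 1-step over $M$ if it is localizable over $M$ and $a\preceq_\mathcal{F}b$ implies $a\preceq^1_\mathcal{F}b$. *)

(* Defs.v *)
From Stdlib Require Import List.
Set Implicit Arguments.

Record Quantale := {
  qcar :> Type;
  qle : qcar -> qcar -> Prop;
  qle_refl : forall x, qle x x;
  qle_trans : forall x y z, qle x y -> qle y z -> qle x z;
  qle_antisym : forall x y, qle x y -> qle y x -> x = y;
  (* join of a subset; meaningful only for nonempty subsets *)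
  qsup : (qcar -> Prop) -> qcar;
  qsup_ub : forall (S : qcar -> Prop) x, S x -> qle x (qsup S);
  qsup_least : forall (S : qcar -> Prop) y, (exists x, S x) ->
      (forall x, S x -> qle x y) -> qle (qsup S) y;
  qone : qcar;
  qone_top : forall x, qle x qone;
  qmul : qcar -> qcar -> qcar;
  qmul_assoc : forall x y z, qmul x (qmul y z) = qmul (qmul x y) z;
  qmul_comm : forall x y, qmul x y = qmul y x;
  qmul_one : forall x, qmul qone x = x;
  qmul_sup : forall a (S : qcar -> Prop), (exists x, S x) ->
      qmul a (qsup S) = qsup (fun y => exists x, S x /\ y = qmul a x)
}.

Record QModule (Q : Quantale) := {
  mcar :> Type;
  mle : mcar -> mcar -> Prop;
  mle_refl : forall x, mle x x;
  mle_trans : forall x y z, mle x y -> mle y z -> mle x z;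
  mle_antisym : forall x y, mle x y -> mle y x -> x = y;
  msup : (mcar -> Prop) -> mcar;
  msup_ub : forall (S : mcar -> Prop) x, S x -> mle x (msup S);
  msup_least : forall (S : mcar -> Prop) y, (exists x, S x) ->
      (forall x, S x -> mle x y) -> mle (msup S) y;
  act : qcar Q -> mcar -> mcar;
  act_assoc : forall s t m, act s (act t m) = act (qmul Q s t) m;
  act_one : forall m, act (qone Q) m = m;
  act_supl : forall (S : qcar Q -> Prop) m, (exists s, S s) ->
      act (qsup Q S) m = msup (fun y => exists s, S s /\ y = act s m);
  act_supr : forall s (S : mcar -> Prop), (exists m, S m) ->
      act s (msup S) = msup (fun y => exists m, S m /\ y = act s m)
}.

Section Defs.
Variable Q : Quantale.
Variable M : QModule Q.

Definition fsup (I : Type) (x : I -> M) : M :=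
  msup M (fun y => exists i, x i = y).

Definition fsup_list (I : Type) (x : I -> M) (l : list I) : M :=
  msup M (fun y => exists i, In i l /\ x i = y).

Definition le_star (x : M) (I : Type) (xs : I -> M) : Prop :=
  exists l : list I, l <> nil /\ mle M x (fsup_list xs l).

(** shrinkable modules (families are nonempty, so that their joins exist) *)
Definition shrinkable : Prop :=
  forall (x : M) (I : Type) (xs : I -> M), inhabited I ->
    mle M x (fsup xs) ->
    exists (J : Type) (ys : J -> M), inhabited J /\ x = fsup ys /\
      forall j, le_star (ys j) xs.

Definition mfilter (F : Q -> Prop) : Prop :=
  F (qone Q) /\
  (forall x y, qle Q x y -> F x -> F y) /\
  (forall x y, F x -> F y -> F (qmul Q x y)).

Definition mfsum (F G : Q -> Prop) : Q -> Prop :=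
  fun q => forall H, mfilter H -> (forall x, F x -> H x) ->
                     (forall x, G x -> H x) -> H q.

Definition mfcap (F G : Q -> Prop) : Q -> Prop := fun q => F q /\ G q.

Definition prec1 (F : Q -> Prop) (a b : M) : Prop :=
  exists (I : Type) (as_ : I -> M) (s : I -> Q),
    inhabited I /\ (forall i, F (s i)) /\ mle M a (fsup as_) /\
    forall i, mle M (act M (s i) (as_ i)) b.

(** chain of n steps; precn F 0 a b is a = b (only n >= 1 is used) *)
Fixpoint precn (F : Q -> Prop) (n : nat) (a b : M) : Prop :=
  match n with
  | O => a = b
  | S k => exists c, prec1 F a c /\ precn F k c b
  end.

Definition prec (F : Q -> Prop) (a b : M) : Prop :=
  exists n, 1 <= n /\ precn F n a b.

Definition localizable (F : Q -> Prop) : Prop :=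
  forall b : M, exists nb, 1 <= nb /\ forall a, prec F a b -> precn F nb a b.

Definition one_step (F : Q -> Prop) : Prop :=
  localizable F /\ forall a b, prec F a b -> prec1 F a b.

End Defs.

Arguments mfilter {Q} F.
Arguments mfsum {Q} F G _.
Arguments mfcap {Q} F G _.

(* Main.v *)
Require Import Defs.
From Stdlib Require Import List.

Section Helpers.
Variable Q : Quantale.
Variable M : QModule Q.

Definition mj (x y : M) : M := msup M (fun z => z = x \/ z = y).
Definition qj (x y : Q) : Q := qsup Q (fun z => z = x \/ z = y).

Lemma mj_l x y : mle M x (mj x y).
Proof. apply msup_ub; auto. Qed.
Lemma mj_r x y : mle M y (mj x y).
Proof. apply msup_ub; auto. Qed.
Lemma mj_least x y z : mle M x z -> mle M y z -> mle M (mj x y) z.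
Proof. intros. apply msup_least. exists x; auto. intros w [->| ->]; auto. Qed.

Lemma act_mono_r s x y : mle M x y -> mle M (act M s x) (act M s y).
Proof.
  intros h.
  assert (e : mj x y = y).
  { apply mle_antisym. apply mj_least; auto. apply mle_refl. apply mj_r. }
  rewrite <- e. unfold mj. rewrite act_supr by (exists x; auto).
  apply msup_ub. exists x. split; auto.
Qed.

Lemma act_mono_l s t x : qle Q s t -> mle M (act M s x) (act M t x).
Proof.
  intros h.
  assert (e : qj s t = t).
  { apply qle_antisym. apply qsup_least. exists s; auto.
    intros w [->| ->]; auto. apply qle_refl. apply qsup_ub; auto. }
  rewrite <- e. unfold qj. rewrite act_supl by (exists s; auto).
  apply msup_ub. exists s. split; auto.
Qed.

Lemma act_le s x : mle M (act M s x) x.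
Proof.
  eapply mle_trans. apply (act_mono_l s (qone Q)). apply qone_top.
  rewrite act_one. apply mle_refl.
Qed.

Lemma qmul_mono_r a x y : qle Q x y -> qle Q (qmul Q a x) (qmul Q a y).
Proof.
  intros h.
  assert (e : qj x y = y).
  { apply qle_antisym. apply qsup_least. exists x; auto.
    intros w [->| ->]; auto. apply qle_refl. apply qsup_ub; auto. }
  rewrite <- e. unfold qj. rewrite qmul_sup by (exists x; auto).
  apply qsup_ub. exists x. split; auto.
Qed.

Lemma qmul_le_l a b : qle Q (qmul Q a b) a.
Proof.
  eapply qle_trans. apply (qmul_mono_r a b (qone Q)). apply qone_top.
  rewrite qmul_comm, qmul_one. apply qle_refl.
Qed.

Lemma qmul_le_r a b : qle Q (qmul Q a b) b.
Proof. rewrite qmul_comm. apply qmul_le_l. Qed.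

Definition Gd (X : Q -> Prop) (b : M) (z : M) : Prop :=
  exists t, X t /\ mle M (act M t z) b.

Lemma Gd_ne X b : X (qone Q) -> exists z, Gd X b z.
Proof. intros h. exists b, (qone Q). split; auto. rewrite act_one. apply mle_refl. Qed.

Lemma prec1_char X a b : X (qone Q) ->
  (prec1 M X a b <-> mle M a (msup M (Gd X b))).
Proof.
  intros h1. split.
  - intros [I [as_ [s [[i0] [hs [ha hb]]]]]].
    eapply mle_trans. apply ha. unfold fsup. apply msup_least.
    exists (as_ i0), i0; auto.
    intros x [i <-]. apply msup_ub. exists (s i); split; auto.
  - intros ha.
    exists {p : M * Q | X (snd p) /\ mle M (act M (snd p) (fst p)) b}.
    exists (fun p => fst (proj1_sig p)), (fun p => snd (proj1_sig p)).
    split.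
    { constructor. exists (b, qone Q). simpl. split; auto.
      rewrite act_one. apply mle_refl. }
    split. { intros [[z t] [H1 H2]]; simpl; auto. }
    split.
    { eapply mle_trans. apply ha. apply msup_least. apply Gd_ne; auto.
      intros z [t [Ht Hz]]. unfold fsup. apply msup_ub.
      exists (exist _ (z, t) (conj Ht Hz)). reflexivity. }
    intros [[z t] [H1 H2]]; simpl; auto.
Qed.

Lemma Gd_sup_mono X b b' : X (qone Q) -> mle M b b' ->
  mle M (msup M (Gd X b)) (msup M (Gd X b')).
Proof.
  intros h1 h. apply msup_least. apply Gd_ne; auto.
  intros z [t [Ht Hz]]. apply msup_ub. exists t. split; auto.
  eapply mle_trans; eauto.
Qed.

Lemma prec1_mono_l X a a' b : X (qone Q) -> mle M a a' ->
  prec1 M X a' b -> prec1 M X a b.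
Proof.
  intros h1 h H. apply prec1_char; auto. apply prec1_char in H; auto.
  eapply mle_trans; eauto.
Qed.

Lemma prec1_mono_r X a b b' : X (qone Q) -> mle M b b' ->
  prec1 M X a b -> prec1 M X a b'.
Proof.
  intros h1 h H. apply prec1_char; auto. apply prec1_char in H; auto.
  eapply mle_trans. apply H. apply Gd_sup_mono; auto.
Qed.

Lemma prec1_mono_F (X Y : Q -> Prop) a b : (forall q, X q -> Y q) ->
  prec1 M X a b -> prec1 M Y a b.
Proof.
  intros h [I [as_ [s [hi [hs [ha hb]]]]]].
  exists I, as_, s. split; [|split; [|split]]; auto.
Qed.

Lemma precn_mono_F (X Y : Q -> Prop) n : (forall q, X q -> Y q) ->
  forall a b, precn M X n a b -> precn M Y n a b.
Proof.
  intros h. induction n; simpl; auto.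
  intros a b [c [H1 H2]]. exists c. split; eauto using prec1_mono_F.
Qed.

Lemma prec_mono_F (X Y : Q -> Prop) a b : (forall q, X q -> Y q) ->
  prec M X a b -> prec M Y a b.
Proof.
  intros h [n [hn H]]. exists n. split; auto. eapply precn_mono_F; eauto.
Qed.

Lemma precn_mono_l X n a a' b : X (qone Q) -> mle M a a' ->
  precn M X (S n) a' b -> precn M X (S n) a b.
Proof.
  intros h1 h [c [H1 H2]]. exists c. split; auto. eapply prec1_mono_l; eauto.
Qed.

Lemma prec_mono_l X a a' b : X (qone Q) -> mle M a a' ->
  prec M X a' b -> prec M X a b.
Proof.
  intros h1 h [n [hn H]]. destruct n. inversion hn.
  exists (S n). split; auto. eapply precn_mono_l; eauto.
Qed.

Lemma prec1_refl X b : X (qone Q) -> prec1 M X b b.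
Proof.
  intros h1. apply prec1_char; auto. apply msup_ub. exists (qone Q).
  split; auto. rewrite act_one. apply mle_refl.
Qed.

Lemma precn_refl X n b : X (qone Q) -> precn M X (S n) b b.
Proof.
  intros h1. induction n.
  - exists b. split. apply prec1_refl; auto. reflexivity.
  - exists b. split. apply prec1_refl; auto. exact IHn.
Qed.

Lemma prec1_join X x1 x2 c : X (qone Q) ->
  prec1 M X x1 c -> prec1 M X x2 c -> prec1 M X (mj x1 x2) c.
Proof.
  intros h1 H1 H2. apply prec1_char in H1; auto. apply prec1_char in H2; auto.
  apply prec1_char; auto. apply mj_least; auto.
Qed.

Lemma precn_join X n : X (qone Q) -> forall x1 x2 c,
  precn M X (S n) x1 c -> precn M X (S n) x2 c -> precn M X (S n) (mj x1 x2) c.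
Proof.
  intros h1. induction n; intros x1 x2 c H1 H2.
  - destruct H1 as [c1 [H1 e1]]. destruct H2 as [c2 [H2 e2]].
    simpl in e1, e2. subst c1 c2. exists c. split; [apply prec1_join; auto|reflexivity].
  - destruct H1 as [e1 [H1 K1]]. destruct H2 as [e2 [H2 K2]].
    exists (mj e1 e2). split; [|apply IHn; auto].
    apply prec1_join; auto.
    + eapply prec1_mono_r; eauto. apply mj_l.
    + eapply prec1_mono_r; eauto. apply mj_r.
Qed.

Lemma list_prod (X : Q -> Prop) b (hX : mfilter X) :
  forall l : list {z : M | Gd X b z}, exists t, X t /\
    forall i, In i l -> mle M (act M t (proj1_sig i)) b.
Proof.
  destruct hX as [h1 [hup hmul]].
  induction l as [|i l IH].
  - exists (qone Q). split; auto. intros i [].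
  - destruct IH as [t' [Ht' Hl]].
    destruct (proj2_sig i) as [ti [Hti Hi]].
    exists (qmul Q ti t'). split; auto.
    intros i0 [e|hin].
    + subst i0. eapply mle_trans; [|apply Hi]. apply act_mono_l, qmul_le_l.
    + eapply mle_trans; [|apply (Hl i0 hin)]. apply act_mono_l, qmul_le_r.
Qed.

Lemma shrinkGd (hsh : shrinkable M) X (hX : mfilter X) y b :
  prec1 M X y b ->
  (exists z, mle M z y /\ Gd X b z) /\
  mle M y (msup M (fun z => mle M z y /\ Gd X b z)).
Proof.
  intros H. pose proof hX as [h1 [hup hmul]].
  apply prec1_char in H; auto.
  set (I := {z : M | Gd X b z}).
  set (xs := fun i : I => proj1_sig i).
  assert (hle : mle M y (fsup M xs)).
  { eapply mle_trans. apply H. apply msup_least. apply Gd_ne; auto.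
    intros z hz. unfold fsup. apply msup_ub. exists (exist _ z hz). reflexivity. }
  assert (inh : inhabited I).
  { constructor. exists b. exists (qone Q). split; auto. rewrite act_one. apply mle_refl. }
  destruct (hsh y I xs inh hle) as [J [ys [[j0] [Hy Hj]]]].
  assert (Hle : forall j, mle M (ys j) y).
  { intros j. rewrite Hy. unfold fsup. apply msup_ub. exists j; auto. }
  assert (Hg : forall j, Gd X b (ys j)).
  { intros j. destruct (Hj j) as [l [lnn Hl]].
    destruct (list_prod X b hX l) as [t [Ht Htl]].
    exists t. split; auto.
    destruct l as [|i0 l']; [congruence|].
    eapply mle_trans. apply act_mono_r. apply Hl.
    unfold fsup_list. rewrite act_supr.
    2:{ exists (xs i0). exists i0. split; simpl; auto. }
    apply msup_least.
    { exists (act M t (xs i0)). exists (xs i0). split; auto. exists i0. split; simpl; auto. }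
    intros w [m [[i [hin <-]] ->]]. apply Htl; auto. }
  split. { exists (ys j0). split; auto. }
  eapply mle_trans. rewrite Hy at 1. apply mle_refl.
  unfold fsup. apply msup_least. exists (ys j0), j0; auto.
  intros x [j <-]. apply msup_ub. split; auto.
Qed.

Lemma I1 (hsh : shrinkable M) X Y (hX : mfilter X) (hY : mfilter Y) a b :
  prec1 M X a b -> prec1 M Y a b -> prec1 M (mfcap X Y) a b.
Proof.
  intros HX HY. pose proof hX as [h1 [hup hmul]]. pose proof hY as [k1 [kup kmul]].
  apply prec1_char. split; auto.
  destruct (shrinkGd hsh X hX a b HX) as [ne hA].
  eapply mle_trans. apply hA. apply msup_least; auto.
  intros z [hz [t [Ht Htz]]].
  assert (HYz : prec1 M Y z b) by (eapply prec1_mono_l; eauto).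
  destruct (shrinkGd hsh Y hY z b HYz) as [ne' hB].
  eapply mle_trans. apply hB. apply msup_least; auto.
  intros w [hw [u [Hu Huw]]]. apply msup_ub.
  exists (qj t u). split.
  - split. apply (hup t); auto. apply qsup_ub; auto.
    apply (kup u); auto. apply qsup_ub; auto.
  - unfold qj. rewrite act_supl by (exists t; auto).
    apply msup_least. exists (act M t w), t; auto.
    intros v [s [[->| ->] ->]]; auto.
    eapply mle_trans; [apply act_mono_r, hw|]; auto.
Qed.

Lemma mfcap_filter (X Y : Q -> Prop) : mfilter X -> mfilter Y -> mfilter (mfcap X Y).
Proof.
  intros [h1 [hup hmul]] [k1 [kup kmul]]. split; [split; auto|].
  split. intros x y h [H1 H2]; split; eauto.
  intros x y [H1 H2] [H3 H4]; split; auto.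
Qed.

Lemma chainI (hsh : shrinkable M) X Y (hX : mfilter X) (hY : mfilter Y) b :
  forall n y, precn M X (S n) y b -> prec1 M Y y b -> precn M (mfcap X Y) (S n) y b.
Proof.
  pose proof hX as [h1 [hup hmul]]. pose proof hY as [k1 [kup kmul]].
  assert (c1 : mfcap X Y (qone Q)) by (split; auto).
  induction n; intros y Hy HY.
  - destruct Hy as [c [Hc e]]. simpl in e. subst c. exists b. split; [|reflexivity].
    apply I1; auto.
  - destruct Hy as [d [Hd Hn]].
    destruct (shrinkGd hsh X hX y d Hd) as [[z0 [hz0 [t0 [Ht0 Htz0]]]] hA].
    set (d' := msup M (fun w => mle M w y /\ mle M w d)).
    assert (ne : exists w, mle M w y /\ mle M w d).
    { exists (act M t0 z0). split; auto. eapply mle_trans. apply act_le. auto. }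
    assert (d'd : mle M d' d) by (apply msup_least; auto; intros w [_ h]; auto).
    assert (d'y : mle M d' y) by (apply msup_least; auto; intros w [h _]; auto).
    assert (Hyd' : prec1 M X y d').
    { apply prec1_char; auto. eapply mle_trans. apply hA. apply msup_least.
      { destruct ne as [w _]. exists z0. split; auto. exists t0; auto. }
      intros z [hz [t [Ht Htz]]]. apply msup_ub. exists t. split; auto.
      apply msup_ub. split; auto. eapply mle_trans. apply act_le. auto. }
    assert (IH : precn M (mfcap X Y) (S n) d' b).
    { apply IHn. apply (precn_mono_l X n d' d b h1 d'd Hn).
      apply (prec1_mono_l Y d' y b k1 d'y HY). }
    exists (mj d' b). split.
    + apply I1; auto.
      * eapply prec1_mono_r; eauto. apply mj_l.
      * eapply prec1_mono_r; eauto. apply mj_r.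
    + apply precn_join; auto. apply precn_refl; auto.
Qed.

Lemma Dfilter (F G : Q -> Prop) : mfilter F -> mfilter G ->
  mfilter (fun q => exists f g, F f /\ G g /\ qle Q (qmul Q f g) q).
Proof.
  intros [h1 [hup hmul]] [k1 [kup kmul]]. split.
  { exists (qone Q), (qone Q). repeat split; auto. apply qone_top. }
  split.
  { intros x y h [f [g [Hf [Hg Hx]]]]. exists f, g. repeat split; auto.
    eapply qle_trans; eauto. }
  intros x y [f [g [Hf [Hg Hx]]]] [f' [g' [Hf' [Hg' Hy]]]].
  exists (qmul Q f f'), (qmul Q g g'). repeat split; auto.
  replace (qmul Q (qmul Q f f') (qmul Q g g')) with (qmul Q (qmul Q f g) (qmul Q f' g')).
  2:{ rewrite !qmul_assoc. f_equal. rewrite <- !qmul_assoc. f_equal. apply qmul_comm. }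
  eapply qle_trans. apply qmul_mono_r, Hy.
  rewrite (qmul_comm Q (qmul Q f g)), (qmul_comm Q x). apply qmul_mono_r, Hx.
Qed.

Lemma keyK (hsh : shrinkable M) (F G S : Q -> Prop) (hF : mfilter F) (hG : mfilter G)
  (hS : forall a b, prec M F a b -> prec1 M S a b)
  (hSd : forall q, S q -> exists f g, F f /\ G g /\ qle Q (qmul Q f g) q) a b :
  prec M F a b -> exists c, prec1 M F a c /\ prec M (mfcap F G) c b.
Proof.
  intros H. pose proof hF as [h1 [hup hmul]]. pose proof hG as [k1 [kup kmul]].
  set (D := fun q => exists f g, F f /\ G g /\ qle Q (qmul Q f g) q).
  pose proof (Dfilter F G hF hG) as hD.
  assert (HD : prec1 M D a b) by (eapply prec1_mono_F; [|apply hS, H]; auto).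
  destruct (shrinkGd hsh D hD a b HD) as [[z0 [hz0 [q0 [Hq0 Hz0]]]] hA].
  destruct Hq0 as [f0 [g0 [Hf0 [Hg0 Hfg0]]]].
  set (c := msup M (fun w => exists z f g, mle M z a /\ F f /\ G g /\
                  mle M (act M (qmul Q f g) z) b /\ w = act M f z)).
  assert (ne : exists w, exists z f g, mle M z a /\ F f /\ G g /\
                  mle M (act M (qmul Q f g) z) b /\ w = act M f z).
  { exists (act M f0 z0), z0, f0, g0. repeat split; auto.
    eapply mle_trans; [apply act_mono_l, Hfg0|]; auto. }
  exists c. split.
  - apply prec1_char; auto. eapply mle_trans. apply hA. apply msup_least.
    { exists z0. split; auto. exists q0. split; auto. exists f0, g0; auto. }
    intros z [hz [q [[f [g [Hf [Hg Hfg]]]] Hq]]]. apply msup_ub.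
    exists f. split; auto. apply msup_ub. exists z, f, g. repeat split; auto.
    eapply mle_trans; [apply act_mono_l, Hfg|]; auto.
  - assert (hca : mle M c a).
    { apply msup_least; auto. intros w [z [f [g [hz [_ [_ [_ ->]]]]]]].
      eapply mle_trans. apply act_le. auto. }
    destruct (prec_mono_l F c a b h1 hca H) as [n [hn Hn]].
    destruct n. inversion hn. exists (Datatypes.S n). split; auto.
    apply chainI; auto.
    apply prec1_char; auto. apply msup_least; auto.
    intros w [z [f [g [hz [Hf [Hg [Hb ->]]]]]]]. apply msup_ub.
    exists g. split; auto. rewrite act_assoc, qmul_comm. auto.
Qed.

End Helpers.

Lemma precn_MS_le (Q : Quantale) (M : QModule Q) (X : Q -> Prop) :
  X (qone Q) -> (forall s m, X s -> act M s m = m) ->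
  forall n a b, precn M X (S n) a b -> mle M a b.
Proof.
  intros h1 htr.
  assert (P1 : forall a b, prec1 M X a b -> mle M a b).
  { intros a b H. apply prec1_char in H; auto. eapply mle_trans. apply H.
    apply msup_least. apply Gd_ne; auto.
    intros z [t [Ht Hz]]. rewrite htr in Hz; auto. }
  induction n; intros a b [c [Hc Hn]].
  - simpl in Hn. subst. auto.
  - eapply mle_trans. apply P1, Hc. apply IHn; auto.
Qed.

Theorem mainTheorem6 (Q : Quantale) (M : QModule Q) (F G : Q -> Prop) :
  shrinkable M -> mfilter F -> mfilter G -> one_step M (mfsum F G) ->
  ((exists H : Q -> Prop, mfilter H /\ localizable M H /\
      (forall q, mfcap F G q -> H q) /\ (forall q, H q -> F q)) ->
     localizable M F)
  /\
  ((forall (s : Q) (m : M), mfcap F G s -> act M s m = m) ->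
     one_step M F /\ one_step M G).
Proof.
  intros hsh hF hG [_ hos].
  pose proof hF as [h1 [hup hmul]]. pose proof hG as [k1 [kup kmul]].
  pose proof (Dfilter Q F G hF hG) as hD.
  assert (FS : forall q, F q -> mfsum F G q).
  { intros q Hq H _ HF _. auto. }
  assert (GS : forall q, G q -> mfsum F G q).
  { intros q Hq H _ _ HG. auto. }
  assert (Sd : forall q, mfsum F G q -> exists f g, F f /\ G g /\ qle Q (qmul Q f g) q).
  { intros q Hq. apply (Hq _ hD).
    - intros x Hx. exists x, (qone Q). repeat split; auto.
      rewrite qmul_comm, qmul_one. apply qle_refl.
    - intros x Hx. exists (qone Q), x. repeat split; auto.
      rewrite qmul_one. apply qle_refl. }
  assert (KF : forall a b, prec M F a b -> exists c, prec1 M F a c /\ prec M (mfcap F G) c b).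
  { apply (keyK Q M hsh F G (mfsum F G)); auto.
    intros a b H. apply hos. eapply prec_mono_F; [|apply H]; auto. }
  assert (KG : forall a b, prec M G a b -> exists c, prec1 M G a c /\ prec M (mfcap G F) c b).
  { apply (keyK Q M hsh G F (mfsum F G)); auto.
    - intros a b H. apply hos. eapply prec_mono_F; [|apply H]; auto.
    - intros q Hq. destruct (Sd q Hq) as [f [g [Hf [Hg Hl]]]].
      exists g, f. repeat split; auto. rewrite qmul_comm; auto. }
  split.
  - intros [H [hH [hloc [hcap hHF]]]] b.
    destruct (hloc b) as [nb [hnb Hnb]].
    exists (S nb). split; auto.
    intros a Ha. destruct (KF a b Ha) as [c [Hc Hcb]].
    exists c. split; auto.
    eapply precn_mono_F; [apply hHF|]. apply Hnb.
    eapply prec_mono_F; [|apply Hcb]. auto.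
  - intros htr.
    assert (O1 : forall X Y, mfilter X -> mfilter Y ->
               (forall s m, mfcap X Y s -> act M s m = m) ->
               (forall a b, prec M X a b -> exists c, prec1 M X a c /\ prec M (mfcap X Y) c b) ->
               one_step M X).
    { intros X Y hX hY htrX KX. pose proof hX as [x1 _]. pose proof hY as [y1 _].
      assert (P : forall a b, prec M X a b -> prec1 M X a b).
      { intros a b Ha. destruct (KX a b Ha) as [c [Hc [n [hn Hn]]]].
        destruct n. inversion hn.
        eapply prec1_mono_r; eauto.
        apply (precn_MS_le Q M (mfcap X Y)) with n; auto. split; auto. }
      split; auto. intros b. exists 1. split; auto. intros a Ha.
      exists b. split; auto. reflexivity. }
    split.
    + apply (O1 F G); auto.
    + apply (O1 G F); auto. intros s m [H1 H2]. apply htr. split; auto.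
Qed.
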